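(* Let $E\subset[0,1)$ be a measurable set of positive Lebesgue measure and let $T\in\mathrm{IET}$. Then there exist $x_0\in[0,1)$ and constants $\alpha>0$, $\beta>0$ such that for all $n\geq 1$, $$\#\{i : 0\leq i<n,\ T^i(x_0)\in E\}\geq \alpha n-\beta.$$
   Context: $\mathrm{IET}$ denotes the group of interval exchange transformations of $[0,1)$: bijections of $[0,1)$ that are orientation-preserving piecewise isometries (piecewise translations), left-continuous, with finitely many discontinuity points. *)

(* Defs.v *)
From HB Require Import structures.
From mathcomp Require Import all_boot all_order all_algebra.
From mathcomp Require Import all_classical all_reals all_analysis.
Set Implicit Arguments. Unset Strict Implicit. Unset Printing Implicit Defensive.
Import Order.TTheory GRing.Theory Num.Theory.
Local Open Scope classical_set_scope.
Local Open Scope ring_scope.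

Definition I01 {R : realType} : set R := [set x | 0 <= x < 1].

Definition is_IET {R : realType} (T : R -> R) : Prop :=
  (forall x, I01 x -> I01 (T x)) /\
  (forall x y, I01 x -> I01 y -> T x = T y -> x = y) /\
  (forall y, I01 y -> exists x, I01 x /\ T x = y) /\
  exists (k : nat) (a t : nat -> R),
    a 0%N = 0 /\ a k = 1 /\ (forall i, (i < k)%N -> a i < a i.+1) /\
    (forall i x, (i < k)%N -> a i <= x < a i.+1 -> T x = x + t i).

Definition visits {R : realType} (T : R -> R) (E : set R) (x0 : R) (n : nat) : nat :=
  #|[set i : 'I_n | `[< E (iter i T x0) >] ]|.

(* Main.v *)
Require Import Defs.
From HB Require Import structures.
From mathcomp Require Import all_boot all_order all_algebra.
From mathcomp Require Import all_classical all_reals all_analysis.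
Set Implicit Arguments. Unset Strict Implicit. Unset Printing Implicit Defensive.
Import Order.TTheory GRing.Theory Num.Theory.
Local Open Scope classical_set_scope.
Local Open Scope ring_scope.
From mathcomp Require Import lra measurable_realfun.
Section S.
Context {R : realType}.
Local Notation mu := (@lebesgue_measure R).
Lemma shift_meas (t : R) (A : set R) : measurable A ->
  measurable [set x | A (x + t)].
Proof.
move=> mA.
have mf : measurable_fun [set: R] (fun x : R => x + t).
  by apply: measurable_funD => //; exact: measurable_cst.
rewrite -[X in measurable X]setTI.
exact: mf.
Qed.

Lemma shift_inv (t : R) (A : set R) : measurable A ->
  mu [set x | A (x + t)] = mu A.
Proof.
move=> mA.
have mf : measurable_fun [set: measurableTypeR R] ((fun x : R => x + t) : _ -> measurableTypeR R).
  by apply: measurable_funD => //; exact: measurable_cst.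
pose nu := pushforward mu (fun x : R => x + t).
have -> : mu [set x | A (x + t)] = nu A by [].
have := (@lebesgue_measure_unique R (measure_function_pushforward__canonical__measure_function_Measure mu mf)).
move=> H; symmetry; rewrite H //.
move=> _ [[a b]] _ <-; rewrite /= /pushforward.
have -> : (fun x => x + t) @^-1` `]a, b]%classic = `](a - t), (b - t)]%classic.
  apply/seteqP; split => x /=; rewrite !in_itv/= => /andP[h1 h2]; apply/andP; split; lra.
rewrite !lebesgue_measure_itv/= !lte_fin.
rewrite (_ : (a - t < b - t) = (a < b)); last by apply/idP/idP => h; lra.
case: ifP => // _; rewrite -EFinD; congr EFin; lra.
Qed.

Section IET.
Variables (T : R -> R) (k : nat) (a t : nat -> R).
Hypothesis TI : forall x, I01 x -> I01 (T x).
Hypothesis Tinj : forall x y, I01 x -> I01 y -> T x = T y -> x = y.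
Hypothesis Tsurj : forall y, I01 y -> exists x, I01 x /\ T x = y.
Hypothesis a0 : a 0%N = 0.
Hypothesis ak : a k = 1.
Hypothesis amono : forall i, (i < k)%N -> a i < a i.+1.
Hypothesis Tpw : forall i x, (i < k)%N -> a i <= x < a i.+1 -> T x = x + t i.

Lemma a_le i j : (i <= j)%N -> (j <= k)%N -> a i <= a j.
Proof.
move=> ij jk; elim: j ij jk => [|j IH] ij jk.
  by move: ij; rewrite leqn0 => /eqP ->.
case: (ltngtP i j.+1) ij => // [ij|->] _; last by [].
apply: le_trans (IH ij (ltnW jk)) _; exact/ltW/amono.
Qed.

Definition J i := [set x : R | a i <= x < a i.+1].

Lemma J_I01 i : (i < k)%N -> J i `<=` I01.
Proof.
move=> ik x /andP[h1 h2]; rewrite /I01 /=; apply/andP; split.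
  by apply: le_trans h1; rewrite -a0; apply: a_le => //; exact: ltnW.
by apply: lt_le_trans h2 _; rewrite -ak; apply: a_le.
Qed.

Lemma piece x : I01 x -> exists i, (i < k)%N /\ J i x.
Proof.
move=> /andP[h0 h1].
suff : forall j, (j <= k)%N -> x < a j -> exists i, (i < j)%N /\ J i x.
  by move=> /(_ k (leqnn k)); rewrite ak => /(_ h1) [i [ik Ji]]; exists i.
elim=> [|j IH] jk xj; first by rewrite a0 in xj; move: (lt_le_trans xj h0); rewrite ltxx.
case: (ltP x (a j)) => xa.
  by have [i [ij Ji]] := IH (ltnW jk) xa; exists i; split => //; apply: ltnW.
by exists j; split => //; apply/andP.
Qed.

Lemma J_disj i j x : (i < k)%N -> (j < k)%N -> J i x -> J j x -> i = j.
Proof.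
move=> ik jk /andP[hi1 hi2] /andP[hj1 hj2].
case: (ltngtP i j) => // ij.
  have := a_le ij (ltnW jk); move=> h; move: (lt_le_trans hi2 (le_trans h hj1)); by rewrite ltxx.
have := a_le ij (ltnW ik); move=> h; move: (lt_le_trans hj2 (le_trans h hi1)); by rewrite ltxx.
Qed.

Lemma pre_eq (B : set R) : I01 `&` T @^-1` B =
  \bigcup_(i < k) [set x | (i < k)%N /\ (J i x /\ B (x + t i))].
Proof.
apply/seteqP; split => x.
  move=> [Ix Bx]; have [i [ik Ji]] := piece Ix.
  exists i => //; split => //; split => //; by rewrite -(Tpw ik Ji).
move=> [i /= ik [_ [Ji Bx]]]; split; first exact: (J_I01 ik).
by rewrite /preimage /= (Tpw ik Ji).
Qed.

Lemma B_eq (B : set R) : B `<=` I01 -> B =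
  \bigcup_(i < k) [set y | (i < k)%N /\ (J i (y - t i) /\ B y)].
Proof.
move=> BI; apply/seteqP; split => y.
  move=> By; have [x [Ix Txy]] := Tsurj (BI _ By); have [i [ik Ji]] := piece Ix.
  exists i => //; split => //; split => //.
  by rewrite -Txy (Tpw ik Ji) addrK.
by move=> [i /= ik [_ [_ By]]].
Qed.

Lemma pre1 (B : set R) : measurable B -> B `<=` I01 ->
  measurable (I01 `&` T @^-1` B) /\ mu (I01 `&` T @^-1` B) = mu B.
Proof.
move=> mB BI.
have mJ i : measurable (J i).
  have -> : J i = `[a i, a i.+1[%classic.
    by apply/seteqP; split => x; rewrite /J /= in_itv.
  exact: measurable_itv.
have mF i : measurable [set x | (i < k)%N /\ (J i x /\ B (x + t i))].
  have [ik|ik] := pselect (is_true (i < k)%N).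
    have -> : [set x | (i < k)%N /\ (J i x /\ B (x + t i))] = J i `&` [set x | B (x + t i)].
      by apply/seteqP; split => x /=; [case=> _ //| move=> h; split].
    by apply: measurableI => //; apply: shift_meas.
  have -> : [set x | (i < k)%N /\ (J i x /\ B (x + t i))] = set0.
    by apply/seteqP; split => x //= [h].
  exact: measurable0.
have mG i : measurable [set y | (i < k)%N /\ (J i (y - t i) /\ B y)].
  have [ik|ik] := pselect (is_true (i < k)%N).
    have -> : [set y | (i < k)%N /\ (J i (y - t i) /\ B y)] = [set y | J i (y - t i)] `&` B.
      by apply/seteqP; split => x /=; [case=> _ //| move=> h; split].
    by apply: measurableI => //; apply: shift_meas.
  have -> : [set y | (i < k)%N /\ (J i (y - t i) /\ B y)] = set0.
    by apply/seteqP; split => x //= [h].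
  exact: measurable0.
rewrite pre_eq; split.
  by apply: bigcup_measurable => i _; apply: mF.
rewrite {2}(B_eq BI) !bigcup_mkord.
transitivity (\sum_(i < k) mu [set x | (i < k)%N /\ (J i x /\ B (x + t i))]).
  apply: (@measure_bigsetU _ _ _ mu _ mF).
  move=> i j _ _ [x [[ik [Ji _]] [jk [Jj _]]]]; exact: (J_disj ik jk Ji Jj).
transitivity (\sum_(i < k) mu [set y | (i < k)%N /\ (J i (y - t i) /\ B y)]); last first.
  apply/esym; apply: (@measure_bigsetU _ _ _ mu _ mG).
  move=> i j _ _ [y [[ik [Ji By]] [jk [Jj _]]]].
  have Ii := J_I01 ik Ji; have Ij := J_I01 jk Jj.
  have : y - t i = y - t j.
    apply: Tinj => //; rewrite (Tpw ik Ji) (Tpw jk Jj) !subrK //.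
  move=> e; rewrite e in Ji; exact: (J_disj ik jk Ji Jj).
apply: eq_bigr => i _.
rewrite -(shift_inv (t i) (mG i)); congr (mu _).
apply/seteqP; split => x /=; by rewrite addrK.
Qed.
Definition vis (A : set R) x n : R := \sum_(i < n) \1_A (iter i T x).
Lemma visitsE E x n : ((visits T E x n)%:R : R) = vis E x n.
Proof.
rewrite /visits /vis -sum1_card natr_sum big_mkcond /=.
apply: eq_bigr => i _; rewrite /indic.
have [h|h] := asboolP (E (iter i T x)).
  by rewrite !mem_set //=; apply/asboolP.
rewrite !memNset //=; by move/asboolP.
Qed.

Lemma indic_le1 (A : set R) y : \1_A y <= 1 :> R.
Proof. by rewrite /indic; case: (_ \in _). Qed.
Lemma indic_ge0' (A : set R) y : 0 <= \1_A y :> R.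
Proof. by rewrite /indic; case: (_ \in _). Qed.

Lemma vis_ge0 A x n : 0 <= vis A x n.
Proof. by apply: sumr_ge0 => i _; apply: indic_ge0'. Qed.

Lemma vis_le A x n : vis A x n <= n%:R.
Proof.
rewrite /vis -[n in n%:R]card_ord -sumr_const.
by apply: ler_sum => i _; apply: indic_le1.
Qed.

Lemma vis_add A x m n : vis A x (m + n) = vis A x m + vis A (iter m T x) n.
Proof.
rewrite /vis big_split_ord /=; congr (_ + _).
by apply: eq_bigr => i _ /=; rewrite addnC iterD.
Qed.

Lemma vis_S A x n : vis A x n.+1 = \1_A x + vis A (T x) n.
Proof.
rewrite -add1n vis_add; congr (_ + _).
by rewrite /vis big_ord1.
Qed.

Lemma vis0 A x : vis A x 0 = 0.
Proof. by rewrite /vis big_ord0. Qed.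


Lemma iterI n x : I01 x -> I01 (iter n T x).
Proof. by elim: n => //= n IH Ix; apply: TI; apply: IH. Qed.

Section Comb.
Variables (E : set R) (c : R) (M : nat).
Hypothesis c0 : 0 <= c.
Definition Gs := [set y | I01 y /\ forall n, (1 <= n <= M)%N -> c * n%:R <= vis E y n].

Lemma comb L x : I01 x -> vis E x L <= c * L%:R + M%:R + vis Gs x L.
Proof.
elim/ltn_ind: L x => L IH x Ix.
have [Gx|Gx] := pselect (Gs x).
  case: L IH => [|L] IH.
    rewrite !vis0 mulr0 add0r addr0; exact: ler0n.
  rewrite !vis_S.
  have h1 := IH L (ltnSn L) (T x) (TI Ix).
  have -> : \1_Gs x = 1 :> R by rewrite /indic mem_set.
  have h2 := indic_le1 E x.
  have h3 : c * L%:R <= c * L.+1%:R by apply: ler_wpM2l => //; rewrite ler_nat.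
  lra.
have [n [nM vn]] : exists n, (1 <= n <= M)%N /\ vis E x n < c * n%:R.
  apply: contrapT => H; apply: Gx; split => // n nM.
  rewrite leNgt; apply/negP => h; apply: H; by exists n.
have n1 : (1 <= n)%N by case/andP: nM.
have nM' : (n <= M)%N by case/andP: nM.
have hG := vis_ge0 Gs x L.
case: (leqP n L) => nL.
  rewrite -(subnKC nL) !vis_add.
  have h1 := IH (L - n)%N ltac:(rewrite ltn_subrL; apply/andP; split => //; exact: leq_trans nL) (iter n T x) (iterI n Ix).
  have h2 := vis_ge0 Gs x n.
  have -> : c * (n + (L - n))%:R = c * n%:R + c * (L - n)%:R by rewrite natrD mulrDr.
  lra.
have h1 := vis_le E x L.
have h2 : (L%:R : R) <= M%:R by rewrite ler_nat; apply: leq_trans nM'; exact: ltnW.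
have h3 : 0 <= c * L%:R by apply: mulr_ge0.
lra.
Qed.
End Comb.

Definition P (A : set R) j := [set x | I01 x /\ A (iter j T x)].

Lemma P_meas A j : measurable A -> A `<=` I01 -> measurable (P A j) /\ mu (P A j) = mu A.
Proof.
move=> mA AI; elim: j => [|j [mP eP]].
  have -> : P A 0 = A.
    by apply/seteqP; split => x /=; [case| move=> h; split => //; apply: AI].
  by [].
have -> : P A j.+1 = I01 `&` T @^-1` (P A j).
  apply/seteqP; split => x /=.
    by case=> Ix; rewrite iterSr => h; split => //; split => //; apply: TI.
  by case=> Ix [_ h]; split => //; rewrite iterSr.
have [h1 h2] := pre1 mP (fun x => @proj1 _ _).
by rewrite h2.
Qed.

Definition f (A : set R) L x : R := \sum_(i < L) \1_(P A i) x.

Lemma f_vis A L x : I01 x -> f A L x = vis A x L.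
Proof.
move=> Ix; apply: eq_bigr => i _; rewrite /indic.
have [h|h] := pselect (A (iter i T x)).
  by rewrite !mem_set.
rewrite !memNset //; by case.
Qed.

Lemma f_meas A L : measurable A -> A `<=` I01 -> measurable_fun setT (f A L).
Proof.
move=> mA AI; apply: measurable_sum => i.
by apply: measurable_indic; have [] := P_meas i mA AI.
Qed.

Lemma I01E : I01 = `[0%R, 1%R[%classic :> set R.
Proof. by apply/seteqP; split => x; rewrite /I01 /= in_itv. Qed.

Lemma mI01 : measurable (I01 : set R).
Proof. by rewrite I01E; apply: measurable_itv. Qed.

Lemma muI01 : mu I01 = 1%E.
Proof. by rewrite I01E lebesgue_measure_itv /= lte_fin ltr01 oppr0 adde0. Qed.

Lemma int_f A L : measurable A -> A `<=` I01 ->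
  (\int[mu]_(x in I01) (f A L x)%:E = \sum_(i < L) mu A)%E.
Proof.
move=> mA AI.
transitivity (\int[mu]_(x in I01) (\sum_(i < L) (\1_(P A i) x)%:E))%E.
  by apply: eq_integral => x _; rewrite /f sumEFin.
rewrite ge0_integral_sum //.
apply: eq_bigr => i _; rewrite integral_indic; last by have [] := P_meas i mA AI.
- rewrite setIidl; first by have [] := P_meas i mA AI.
  by move=> x [].
- exact: mI01.
- exact: mI01.
- move=> i; apply/measurable_EFinP; apply: measurable_indic.
  by have [] := P_meas i mA AI.
Qed.

Lemma contra (E : set R) : measurable E -> E `<=` I01 -> (0 < mu E)%E ->
  exists c : R, 0 < c /\
   ~ (forall y, I01 y -> exists n, (1 <= n)%N /\ vis E y n < c * n%:R).
Proof.
move=> mE EI E0.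
have finI (B : set R) : measurable B -> B `<=` I01 -> mu B \is a fin_num.
  move=> mB BI; rewrite ge0_fin_numE //.
  apply: (@le_lt_trans _ _ (mu I01)); last by rewrite muI01 ltry.
  by apply: le_measure => //; rewrite inE //; exact: mI01.
set e := fine (mu E).
have eE : mu E = e%:E by rewrite fineK //; apply: finI.
have e0 : 0 < e by rewrite -lte_fin -eE.
exists (e / 2); split; first by lra.
move=> H.
pose c := e / 2.
have c0 : 0 <= c by rewrite /c; lra.
pose G M := Gs E c M.
have GI M : G M `<=` I01 by move=> y [].
have Gmeas M : measurable (G M).
  have -> : G M = I01 `&` \bigcap_n [set y | (1 <= n <= M)%N -> c * n%:R <= f E n y].
    apply/seteqP; split => y.
      move=> [Iy Hy]; split => // n _ /= nM; rewrite f_vis //; exact: Hy.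
    move=> [Iy Hy]; split => // n nM; rewrite -f_vis //; exact: Hy n I nM.
  apply: measurableI; first exact: mI01.
  apply: bigcapT_measurable => n.
  have [nM|nM] := pselect (is_true (1 <= n <= M)%N).
    have -> : [set y | (1 <= n <= M)%N -> c * n%:R <= f E n y] =
        setT `&` (f E n) @^-1` `[c * n%:R, +oo[%classic.
      apply/seteqP; split => y /=; rewrite in_itv /= andbT.
        by move=> h; split => //; apply: h.
      by case=> _ h.
    by apply: (f_meas n mE EI) => //; exact: measurable_itv.
  have -> : [set y | (1 <= n <= M)%N -> c * n%:R <= f E n y] = setT.
    by apply/seteqP; split => y //= _ h.
  exact: measurableT.
have Gdec : nonincreasing_seq G.
  move=> m n mn; rewrite subsetEset => y [Iy Hy]; split => // j /andP[j1 jn].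
  by apply: Hy; rewrite j1 /=; exact: leq_trans jn mn.
have Gcap : \bigcap_n G n = set0.
  apply/seteqP; split => y // Hy.
  have Iy : I01 y := (Hy 0%N I).1.
  have [n [n1 vn]] := H y Iy.
  have [_ h] := Hy n I.
  have := h n; rewrite n1 leqnn => /(_ isT).
  by move=> h'; move: (lt_le_trans vn h'); rewrite ltxx.
have cv : (mu \o G) @ \oo --> mu (\bigcap_n G n).
  apply: nonincreasing_cvg_mu => //.
  - by rewrite -ge0_fin_numE //; apply: finI.
  - by apply: bigcapT_measurable.
rewrite Gcap measure0 in cv.
have [_ cv'] := (fine_cvgP _ _).1 cv.
have ev := cvgr_lt 0 cv' (e / 4) ltac:(by apply: divr_gt0).
have [N _ HN] := ev.
have gN := HN N (leqnn N).
set g := fine (mu (G N)) in gN.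
have gE : mu (G N) = g%:E by rewrite fineK //; apply: finI.
have g0 : 0 <= g by rewrite -lee_fin -gE.
pose L := Num.Def.archi_bound (N%:R * 4 / e).
have hL : N%:R * 4 / e < L%:R.
  by apply: archi_boundP; rewrite divr_ge0 // ?mulr_ge0 // ltW.
have hLe : N%:R * 4 < L%:R * e by rewrite -ltr_pdivrMr.
have Hint : (\int[mu]_(x in I01) (f E L x)%:E <=
    \int[mu]_(x in I01) ((c * L%:R + N%:R) + f (G N) L x)%:E)%E.
  apply: ge0_le_integral => //.
  - exact: mI01.
  - by move=> x _; rewrite lee_fin; apply: sumr_ge0 => i _; apply: indic_ge0'.
  - by apply/measurable_EFinP; apply: measurable_funTS; apply: f_meas.
  - apply/measurable_EFinP; apply: measurable_funTS; apply: measurable_funD.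
      exact: measurable_cst.
    by apply: f_meas.
  - by move=> x Ix; rewrite lee_fin !f_vis //; exact: comb.
have R1 : (\int[mu]_(x in I01) ((c * L%:R + N%:R) + f (G N) L x)%:E =
    (c * L%:R + N%:R)%:E + \sum_(i < L) mu (G N))%E.
  transitivity (\int[mu]_(x in I01) ((c * L%:R + N%:R)%:E + (f (G N) L x)%:E))%E.
    by apply: eq_integral => x _; rewrite EFinD.
  rewrite ge0_integralD //.
  - rewrite integral_cst; last exact: mI01.
    congr (_ + _); last by apply: int_f.
    by rewrite -[RHS]mule1; congr (_ * _)%E; exact: muI01.
  - exact: mI01.
  - move=> x _; rewrite lee_fin; apply: addr_ge0; last exact: ler0n.
    by apply: mulr_ge0.
  - move=> x _; rewrite lee_fin; apply: sumr_ge0 => i _; apply: indic_ge0'.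
  - by apply/measurable_EFinP; apply: measurable_funTS; apply: f_meas.
rewrite R1 (int_f L mE EI) eE gE in Hint.
rewrite !sumEFin -EFinD lee_fin !sumr_const !card_ord in Hint.
rewrite -[e *+ L]mulr_natr -[g *+ L]mulr_natr in Hint.
have hg : g * L%:R <= e / 4 * L%:R by apply: ler_wpM2r => //; exact: ltW.
move: Hint hg hLe; rewrite /c.
clear.
move=> h1 h2 h3.
lra.
Qed.

End IET.
End S.

Unset Implicit Arguments.
Theorem mainTheorem16 (R : realType) (E : set R) (T : R -> R) :
  measurable E -> E `<=` I01 -> (0 < (@lebesgue_measure R) E)%E ->
  is_IET T ->
  exists x0 : R, I01 x0 /\
    exists alpha beta : R, 0 < alpha /\ 0 < beta /\
      forall n : nat, (1 <= n)%N ->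
        alpha * n%:R - beta <= (visits T E x0 n)%:R.
Proof.
move=> mE EI E0 [TI [Tinj [Tsurj [k [a [t [a0 [ak [amono Tpw]]]]]]]]].
have [c [c0 Hc]] := @contra R T k a t TI Tinj Tsurj a0 ak amono Tpw E mE EI E0.
have [x0 [Ix0 Hx0]] : exists x0, I01 x0 /\
    forall n, (1 <= n)%N -> c * n%:R - 1 <= (visits T E x0 n)%:R.
  apply: contrapT => Hn; apply: Hc => y Iy.
  apply: contrapT => Hy; apply: Hn; exists y; split => // n n1.
  rewrite visitsE leNgt; apply/negP => h; apply: Hy; exists n; split => //.
  by apply: lt_le_trans h _; rewrite lerBlDr lerDl.
by exists x0; split => //; exists c, 1; split => //; split => //.
Qed.
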